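(* The set $\{t_1^{c_1}\cdots t_n^{c_n}g_w : w\in\mathfrak S(n),\ 0\le c_1,\ldots,c_n\le r-1\}$ is an $R$-basis of $\mathcal H_{n,r}$.
   Context: Standing setup: $R$ is an integral domain, $n\ge 1$, $r\ge 1$, and $q,u_1,\ldots,u_r\in R$ with $q$ invertible in $R$ and $\Delta:=\prod_{1\le j<i\le r}(u_i-u_j)$ invertible in $R$. For $1\le c\le r$ let $F_c(X)\in R[X]$ be the unique polynomial of degree $\le r-1$ with $F_c(u_{c'})=\delta_{c,c'}\Delta$ for all $1\le c'\le r$. The modified Ariki–Koike (Shoji) algebra $\mathcal H_{n,r}=\mathcal H_{n,r}(R,q,u_1,\ldots,u_r)$ is the associative $R$-algebra generated by $t_1,\ldots,t_n,T_1,\ldots,T_{n-1}$ subject to: $(T_i-q)(T_i+q^{-1})=0$; $(t_i-u_1)\cdots(t_i-u_r)=0$; $T_iT_{i+1}T_i=T_{i+1}T_iT_{i+1}$; $T_iT_j=T_jT_i$ for $|i-j|\ge2$; $t_it_j=t_jt_i$; $T_jt_k=t_kT_j$ for $k\ne j,j+1$; and for $2\le j\le n$: $T_{j-1}t_j=t_{j-1}T_{j-1}+\Delta^{-2}\sum_{1\le c_1<c_2\le r}(u_{c_2}-u_{c_1})(q-q^{-1})F_{c_1}(t_{j-1})F_{c_2}(t_j)$ and $T_{j-1}t_{j-1}=t_jT_{j-1}-\Delta^{-2}\sum_{1\le c_1<c_2\le r}(u_{c_2}-u_{c_1})(q-q^{-1})F_{c_1}(t_{j-1})F_{c_2}(t_j)$.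 It is known (Shoji) that $\{t_1^{c_1}\cdots t_n^{c_n}T_w\}$ ($w\in\mathfrak S(n)$, $0\le c_i\le r-1$) is an $R$-basis. Write $[1,r]=\{1,\ldots,r\}$; for $\mathbf k=(k_1,\ldots,k_n)\in[1,r]^n$ set $b_{\mathbf k}:=\prod_{i=1}^n\prod_{1\le j\le r,\,j\ne k_i}\frac{t_i-u_j}{u_{k_i}-u_j}$. For $1\le i,j\le n$ let $B'_{i,j}:=-(q-q^{-1})\sum_{\mathbf k,\ k_i<k_j}b_{\mathbf k}$; for $1\le i\le n-1$ let $g_i:=T_i+B'_{i,i+1}$. For $w\in\mathfrak S(n)$ with reduced expression $w=s_{i_1}\cdots s_{i_l}$, $T_w:=T_{i_1}\cdots T_{i_l}$ and $g_w:=g_{i_1}\cdots g_{i_l}$ (independent of the reduced expression). *)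

(* Defs.v *)
From HB Require Import structures.
From mathcomp Require Import all_boot all_order all_algebra all_fingroup.
Set Implicit Arguments. Unset Strict Implicit. Unset Printing Implicit Defensive.
Import GRing.Theory.
Local Open Scope ring_scope.

(* Conventions: generators t_1..t_n, T_1..T_{n-1} and parameters u_1..u_r are
   given as functions on nat, only the values at the indices in range matter
   (1-based indexing as in the paper). *)

Definition peval (R : nzRingType) (A : lalgType R) (p : {poly R}) (a : A) : A :=
  \sum_(i < size p) p`_i *: a ^+ i.

Definition Delta (R : nzRingType) (r : nat) (u : nat -> R) : R :=
  \prod_(1 <= i < r.+1) \prod_(1 <= j < i) (u i - u j).

Definition is_F (R : nzRingType) (r : nat) (u : nat -> R) (F : nat -> {poly R}) :=
  forall c, (1 <= c <= r)%N ->
    (size (F c) <= r)%N /\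
    forall c', (1 <= c' <= r)%N -> (F c).[u c'] = (if c == c' then Delta r u else 0).

Section AK.
Variables (R : comUnitRingType) (A : algType R) (n r : nat).
Variables (q : R) (u : nat -> R) (F : nat -> {poly R}).
Variables (t T : nat -> A).

Definition AKcorr (j : nat) : A :=
  \sum_(1 <= c1 < r.+1) \sum_(c1.+1 <= c2 < r.+1)
     (((Delta r u) ^+ 2)^-1 * ((u c2 - u c1) * (q - q^-1)))
       *: (peval (F c1) (t j.-1) * peval (F c2) (t j)).

Definition AK_relations : Prop :=
  (forall i, (1 <= i <= n.-1)%N -> (T i - q%:A) * (T i + (q^-1)%:A) = 0) /\
      (forall i, (1 <= i <= n)%N -> \prod_(1 <= c < r.+1) (t i - (u c)%:A) = 0) /\
      (forall i, (1 <= i)%N -> (i.+1 <= n.-1)%N ->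
          T i * T i.+1 * T i = T i.+1 * T i * T i.+1) /\
      (forall i j, (1 <= i <= n.-1)%N -> (1 <= j <= n.-1)%N ->
          (i.+1 < j)%N || (j.+1 < i)%N -> T i * T j = T j * T i) /\
      (forall i j, (1 <= i <= n)%N -> (1 <= j <= n)%N -> t i * t j = t j * t i) /\
      (forall j k, (1 <= j <= n.-1)%N -> (1 <= k <= n)%N -> k != j -> k != j.+1 ->
          T j * t k = t k * T j) /\
      (forall j, (2 <= j <= n)%N ->
          T j.-1 * t j = t j.-1 * T j.-1 + AKcorr j /\
          T j.-1 * t j.-1 = t j * T j.-1 - AKcorr j).

(* k in [1,r]^n is encoded as k : {ffun 'I_n -> 'I_r}, with k_m = (k (m-1)).+1 *)
Definition kcomp (k : {ffun 'I_n -> 'I_r}) (m : nat) : nat :=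
  odflt 0%N (omap (fun o : 'I_n => (k o).+1) (insub m.-1)).

Definition bk (k : {ffun 'I_n -> 'I_r}) : A :=
  \prod_(i < n) \prod_(j < r | j != k i)
     ((t i.+1 - (u j.+1)%:A) * ((u (k i).+1 - u j.+1)^-1)%:A).

Definition Bp (i j : nat) : A :=
  - (q - q^-1) *: \sum_(k : {ffun 'I_n -> 'I_r} | (kcomp k i < kcomp k j)%N) bk k.

Definition g (i : nat) : A := T i + Bp i i.+1.

End AK.

(* Simple transposition s_i = (i, i+1) in S(n) (1-based), as a permutation of
   'I_n (positions i-1 and i). *)
Definition stransp (n i : nat) : 'S_n :=
  match insub i.-1, insub i with
  | Some x, Some y => tperm x y
  | _, _ => 1%g
  end.

Definition word_ok (n : nat) (s : seq nat) : bool :=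
  all (fun i => (1 <= i <= n.-1)%N) s.

Definition word_perm (n : nat) (s : seq nat) : 'S_n :=
  (\prod_(i <- s) stransp n i)%g.

Definition reduced_expr (n : nat) (w : 'S_n) (s : seq nat) : Prop :=
  [/\ word_ok n s, word_perm n s = w &
      forall s', word_ok n s' -> word_perm n s' = w -> (size s <= size s')%N].

Definition word_prod (R : nzRingType) (A : lalgType R) (X : nat -> A) (s : seq nat) : A :=
  \prod_(i <- s) X i.

Definition is_Rbasis (R : nzRingType) (M : lmodType R) (I : finType) (f : I -> M) : Prop :=
  forall m : M, exists! c : {ffun I -> R}, m = \sum_(i : I) c i *: f i.

Definition tmon (R : nzRingType) (A : lalgType R) (n r : nat) (t : nat -> A)
    (c : {ffun 'I_n -> 'I_r}) : A :=
  \prod_(i < n) t i.+1 ^+ c i.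

(* Main.v *)
Require Import Defs.
From HB Require Import structures.
From mathcomp Require Import all_boot all_order all_algebra all_fingroup.
From mathcomp Require Import zify.
Set Implicit Arguments. Unset Strict Implicit. Unset Printing Implicit Defensive.
Import GRing.Theory.

Section Perms.
Variable m : nat.
Local Notation N := m.+1.
Implicit Types (w : 'S_N) (s : seq nat).

Lemma stransp_E i : (1 <= i <= m)%N ->
  stransp N i = tperm (inord i.-1 : 'I_N) (inord i).
Proof.
move=> /andP[h1 h2]; rewrite /stransp.
have e1 : (i.-1 < N)%N by lia.
have e2 : (i < N)%N by lia.
case: insubP => [x _ Ex|]; last by rewrite e1.
case: insubP => [y _ Ey|]; last by rewrite e2.
congr tperm; apply: val_inj; rewrite /= inordK //.
Qed.

Lemma word_perm_cons i s : word_perm N (i :: s) = (stransp N i * word_perm N s)%g.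
Proof. by rewrite /word_perm big_cons. Qed.

Lemma word_perm_nil : word_perm N [::] = 1%g.
Proof. by rewrite /word_perm big_nil. Qed.

Lemma stransp2 i : (stransp N i * stransp N i)%g = 1%g.
Proof. rewrite /stransp; case: (insub i.-1 : option 'I_N) => [x|]; case: (insub i : option 'I_N) => [y|]; by rewrite ?mulg1 ?tperm2. Qed.

Definition D i w : bool := (w (inord i) < w (inord i.-1))%N.

Definition ninv w : nat := \sum_(p : 'I_N * 'I_N) ((p.1 < p.2) && (w p.2 < w p.1))%N.


Lemma tperm_adj_val (a b x : 'I_N) : val b = (val a).+1 ->
  val (tperm a b x) = if x == a then val b else if x == b then val a else val x.
Proof.
move=> hb; case: tpermP => [->|->|/eqP xa /eqP xb]; rewrite ?eqxx //.
  by case: eqP => // eba; move: hb; rewrite -eba; lia.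
by rewrite (negPf xa) (negPf xb).
Qed.

Lemma tperm_adj_lt (a b x y : 'I_N) : val b = (val a).+1 ->
  (x, y) != (a, b) -> (x, y) != (b, a) ->
  (tperm a b x < tperm a b y)%N = (x < y)%N.
Proof.
move=> hb; rewrite !tperm_adj_val // !xpair_eqE -!(inj_eq val_inj) hb.
rewrite -[(x < y)%N]/(val x < val y)%N.
move: (val x) (val y) (val a) => X Y Z.
by repeat case: eqP => ? /=; lia.
Qed.

Lemma inv_s i w : (1 <= i <= m)%N ->
  (ninv (stransp N i * w)%g + D i w = ninv w + ~~ D i w)%N.
Proof.
move=> hi; rewrite stransp_E //; set a : 'I_N := inord i.-1; set b : 'I_N := inord i.
have hb : val b = (val a).+1 by rewrite /a /b /= !inordK; lia.
have ab : a != b by rewrite -(inj_eq val_inj) hb; apply/negP => /eqP h; move: (n_Sn (val a)); rewrite -h.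
set tau := tperm a b.
have hinj : injective (fun p : 'I_N * 'I_N => (tau p.1, tau p.2)).
  by move=> [x1 x2] [y1 y2] /= [/perm_inj -> /perm_inj ->].
rewrite /ninv [X in (X + _)%N](reindex_inj hinj) /=.
have E : forall p : 'I_N * 'I_N, ((tau * w)%g (tau p.2) < (tau * w)%g (tau p.1))%N = (w p.2 < w p.1)%N.
  by move=> p; rewrite !permM !tpermK.
under eq_bigr => p _ do rewrite E.
rewrite (bigD1 (a, b)) //= (bigD1 (b, a)) /=; last by rewrite xpair_eqE eq_sym (negPf ab).
rewrite [in RHS](bigD1 (a, b)) //= [in RHS](bigD1 (b, a)) /=; last by rewrite xpair_eqE eq_sym (negPf ab).
under eq_bigr => p /andP[h1 h2] do rewrite /tau (tperm_adj_lt hb h1 h2).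
rewrite /tau tpermL tpermR /D -/a -/b.
have lab : (a < b)%N by rewrite -[(a<b)%N]/(val a < val b)%N hb.
have nba : (b < a)%N = false by rewrite ltnNge (ltnW lab).
rewrite lab nba /=.
have wab : w a != w b by rewrite (inj_eq perm_inj).
case: (ltngtP (w a) (w b)) => h /=.
- by rewrite addn0 add0n; lia.
- by rewrite addn0 add0n; lia.
- by move: wab; rewrite -(inj_eq val_inj) /= h eqxx.
Qed.


Lemma inv1 : ninv 1 = 0%N.
Proof. by rewrite /ninv big1 // => p _; rewrite !perm1; case: ltngtP. Qed.

Lemma inv_s_le i w : (1 <= i <= m)%N -> (ninv (stransp N i * w)%g <= (ninv w).+1)%N.
Proof. by move=> hi; have := inv_s w hi; case: (D i w) => /=; lia. Qed.

Lemma inv_word s : word_ok N s -> (ninv (word_perm N s) <= size s)%N.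
Proof.
elim: s => [|i s IH] /=; first by rewrite word_perm_nil inv1.
case/andP=> hi hs; rewrite word_perm_cons; apply: leq_trans (inv_s_le _ hi) _.
by rewrite ltnS IH.
Qed.

Lemma no_desc w : (forall i, (1 <= i <= m)%N -> ~~ D i w) -> w = 1%g.
Proof.
move=> H.
pose f k := val (w (inord k)).
have step k : (k < m)%N -> (f k < f k.+1)%N.
  move=> hk; have := H k.+1 ltac:(lia); rewrite /D /= -leqNgt.
  rewrite leq_eqVlt => /orP[/eqP e|//].
  have := perm_inj (val_inj e); move/(congr1 val); rewrite /= !inordK; lia.
have mono j k : (k + j <= m)%N -> (f k + j <= f (k + j))%N.
  elim: j => [|j IHj] hkj; first by rewrite !addn0.
  have := IHj ltac:(lia); have := step (k + j) ltac:(lia); rewrite !addnS; lia.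
apply/permP => x; rewrite perm1; apply: val_inj.
have hx : (x <= m)%N by have := ltn_ord x; lia.
have ex : x = inord x by apply: val_inj; rewrite /= inordK.
have h1 := mono x 0%N ltac:(lia).
have h2 := mono (m - x)%N x ltac:(lia).
have h3 : (f (x + (m - x)) < N)%N by exact: ltn_ord.
rewrite /f -ex in h1 h2 h3 *; move: h1 h2 h3 => /=; lia.
Qed.

Lemma desc_exists w : w != 1%g -> exists2 i, (1 <= i <= m)%N & D i w.
Proof.
move=> hw; case: (boolP [exists i : 'I_N, (1 <= i <= m)%N && D i w]).
  by case/existsP => i /andP[h1 h2]; exists i.
move=> hn; case/eqP: hw; apply: no_desc => i hi; apply/negP => hD.
case/existsP: hn; exists (inord i); rewrite inordK ?hi ?hD //; lia.
Qed.

Lemma stranspK i w : (stransp N i * (stransp N i * w))%g = w.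
Proof. by rewrite mulgA stransp2 mul1g. Qed.

Lemma exists_word w : exists s, [/\ word_ok N s, word_perm N s = w & size s = ninv w].
Proof.
move: {2}(ninv w) (erefl (ninv w)) => k; elim: k w => [|k IH] w hk.
  case: (eqVneq w 1%g) => [->|hw]; first by exists [::]; rewrite word_perm_nil inv1.
  by have [i hi hD] := desc_exists hw; have := inv_s w hi; rewrite hD hk /=; lia.
case: (eqVneq w 1%g) => [e|hw]; first by rewrite e inv1 in hk.
have [i hi hD] := desc_exists hw; have := inv_s w hi; rewrite hD hk /= addn0 addn1 => /eqP.
rewrite eqSS => /eqP /IH [s [h1 h2 h3]].
exists (i :: s); rewrite /= hi h1 word_perm_cons h2 stranspK h3; split => //.
by have := inv_s w hi; rewrite hD hk /=; lia.
Qed.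


Definition swp (j k : nat) : nat := if k == j.-1 then j else if k == j then j.-1 else k.

Local Ltac sigsolve :=
  rewrite /swp /=;
  repeat (match goal with |- context [ (?a == ?b) ] =>
    lazymatch a with context [ if _ then _ else _ ] => fail | _ =>
    lazymatch b with context [ if _ then _ else _ ] => fail | _ =>
    case: (@eqP nat a b) => ? /= end end end);
  try lia.

Lemma swp_le j k : (1 <= j <= m)%N -> (k <= m)%N -> (swp j k <= m)%N.
Proof. by rewrite /swp => hj hk; repeat case: eqP => ? //=; lia. Qed.

Lemma sE j k : (1 <= j <= m)%N -> (k <= m)%N ->
  stransp N j (inord k) = inord (swp j k).
Proof.
move=> hj hk; rewrite stransp_E //; apply: val_inj.
rewrite tperm_adj_val /=; last by rewrite !inordK //; lia.
rewrite -!(inj_eq val_inj) /= !inordK; try lia.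
all: try by have := swp_le hj hk; lia.
all: sigsolve.
Qed.

Lemma ordE (x : 'I_N) : x = inord x.
Proof. by apply: val_inj; rewrite /= inordK. Qed.

Lemma ord_le (x : 'I_N) : (x <= m)%N.
Proof. by have := ltn_ord x; lia. Qed.

Lemma stransp_comm i j : (1 <= i <= m)%N -> (1 <= j <= m)%N -> (i.+1 < j)%N || (j.+1 < i)%N ->
  (stransp N i * stransp N j = stransp N j * stransp N i)%g.
Proof.
move=> hi hj hij; apply/permP => x; rewrite !permM (ordE x) !sE ?swp_le ?ord_le //.
by congr inord; sigsolve.
Qed.

Lemma stransp_braid i : (1 <= i)%N -> (i.+1 <= m)%N ->
  (stransp N i * stransp N i.+1 * stransp N i = stransp N i.+1 * stransp N i * stransp N i.+1)%g.
Proof.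
move=> h1 h2; apply/permP => x; rewrite !permM (ordE x) !sE ?swp_le ?ord_le //; try lia.
by congr inord; sigsolve.
Qed.

Lemma D_s i j w : (1 <= i <= m)%N -> (1 <= j <= m)%N ->
  D i (stransp N j * w)%g = (w (inord (swp j i)) < w (inord (swp j i.-1)))%N.
Proof. by move=> hi hj; rewrite /D !permM !sE //; lia. Qed.

Lemma D_far i j w : (1 <= i <= m)%N -> (1 <= j <= m)%N -> (i.+1 < j)%N || (j.+1 < i)%N ->
  D i (stransp N j * w)%g = D i w.
Proof.
move=> hi hj hij; rewrite D_s // /D; congr (w (inord _) < w (inord _))%N;
by sigsolve.
Qed.

Lemma D_adj1 i w : (1 <= i)%N -> (i.+1 <= m)%N -> D i w -> D i.+1 w -> D i.+1 (stransp N i * w)%g.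
Proof.
move=> h1 h2; rewrite D_s //; try lia.
rewrite /swp /D /= eqxx; case: eqP => [?|_]; first lia.
case: eqP => [?|_]; first lia.
case: eqP => [?|_]; first lia.
by move=> a b; apply: ltn_trans b a.
Qed.

Lemma D_adj2 i w : (1 <= i)%N -> (i.+1 <= m)%N -> D i.+1 w ->
  D i (stransp N i.+1 * (stransp N i * w))%g.
Proof.
move=> h1 h2; rewrite /D !permM !sE ?swp_le //; try lia.
sigsolve.
all: by rewrite /D /=.
Qed.

Section Len.
Variable rw : 'S_N -> seq nat.
Hypothesis Hrw : forall w, reduced_expr w (rw w).

Lemma len_inv w : size (rw w) = ninv w.
Proof.
have [h1 h2 h3] := Hrw w.
have [s [s1 s2 s3]] := exists_word w.
apply/eqP; rewrite eqn_leq -{1}s3 h3 //= -{1}h2 inv_word //.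
Qed.

Lemma rw1 : rw 1%g = [::].
Proof. by apply/eqP; rewrite -size_eq0 len_inv inv1. Qed.

End Len.

Lemma reduced_cons i s : word_ok N (i :: s) ->
  size (i :: s) = ninv (word_perm N (i :: s)) ->
  D i (word_perm N (i :: s)) /\ size s = ninv (word_perm N s).
Proof.
case/andP=> hi hs; rewrite word_perm_cons /= => e.
have h1 := inv_word hs.
have h2 := inv_s_le (word_perm N s) hi.
have es : ninv (word_perm N s) = size s by lia.
split=> //.
have := inv_s (stransp N i * word_perm N s)%g hi; rewrite stranspK.
by case: (D i _) => //=; lia.
Qed.

End Perms.

Section Braid.
Variable m : nat.
Local Notation N := m.+1.
Lemma braid_word a (w : 'S_N) : (1 <= a)%N -> (a.+1 <= m)%N ->
  (stransp N a * (stransp N a.+1 * (stransp N a * (stransp N a.+1 * (stransp N a * w)))))%g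
  = (stransp N a.+1 * w)%g.
Proof.
move=> h1 h2.
have e : forall x : 'S_N, (stransp N a * (stransp N a.+1 * (stransp N a * x)))%g
  = (stransp N a.+1 * (stransp N a * (stransp N a.+1 * x)))%g.
  by move=> x; rewrite !mulgA stransp_braid.
by rewrite e stranspK stranspK.
Qed.
End Braid.

Local Open Scope ring_scope.

Ltac absninv := repeat match goal with |- context [ninv ?p] =>
  let X := fresh "X" in move: (ninv p) => X end.

Ltac slia := repeat match goal with H : _ |- _ => clear H end; lia.

Section Matsumoto.
Variable m : nat.
Local Notation N := m.+1.
Variable R0 : nzRingType.
Variable A : lalgType R0.
Variable T : nat -> A.
Hypothesis HB : forall i, (1 <= i)%N -> (i.+1 <= m)%N -> T i * T i.+1 * T i = T i.+1 * T i * T i.+1.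
Hypothesis HC : forall i j, (1 <= i <= m)%N -> (1 <= j <= m)%N -> (i.+1 < j)%N || (j.+1 < i)%N ->
  T i * T j = T j * T i.

Lemma inv_sD i (w : 'S_N) : (1 <= i <= m)%N -> D i w -> (ninv (stransp N i * w)%g).+1 = ninv w.
Proof. by move=> hi hD; have := inv_s w hi; rewrite hD /=; lia. Qed.

Lemma word_prod_cons i s : word_prod T (i :: s) = T i * word_prod T s.
Proof. by rewrite /word_prod big_cons. Qed.

Lemma matsumoto s s' : word_ok N s -> word_ok N s' -> word_perm N s = word_perm N s' ->
  size s = ninv (word_perm N s) -> size s' = size s -> word_prod T s = word_prod T s'.
Proof.
move: {2}(size s) (erefl (size s)) => k; elim/ltn_ind: k s s' => k IH s s' hk ok ok' ep es es'.
case: s ok ep es es' hk => [|i s1] ok ep es es' hk; first by case: s' es' ok' ep.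
case: s' ok' ep es' => [//|j s2] ok' ep es'.
have [Di e1] := reduced_cons ok es.
have es2 : size (j :: s2) = ninv (word_perm N (j :: s2)) by rewrite es' -ep.
have [Dj e2] := reduced_cons ok' es2.
move: Dj; rewrite -ep => Dj.
set w := word_perm N (i :: s1) in Di Dj e1 e2 ep es es2.
have hi : (1 <= i <= m)%N by case/andP: ok.
have hj : (1 <= j <= m)%N by case/andP: ok'.
have ok1 : word_ok N s1 by case/andP: ok.
have ok2 : word_ok N s2 by case/andP: ok'.
have w1 : word_perm N s1 = (stransp N i * w)%g by rewrite /w word_perm_cons stranspK.
have w2 : word_perm N s2 = (stransp N j * w)%g by rewrite ep word_perm_cons stranspK.
have sz : size s1 = size s2 by move: es'; rewrite /= => -[].
have lt1 : (size s1 < k)%N by rewrite -hk.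
rewrite !word_prod_cons.
case: (eqVneq i j) => [eij|nij].
  subst j; congr (_ * _); apply: (IH (size s1)) => //; first by rewrite w1 w2.
have red : forall x s0, word_ok N s0 -> word_perm N s0 = x -> size s0 = ninv x ->
   forall s3, word_ok N s3 -> word_perm N s3 = x -> size s3 = size s0 ->
   (size s0 < k)%N -> word_prod T s0 = word_prod T s3.
  move=> x s0 o0 p0 z0 s3 o3 p3 z3 l0; apply: (IH (size s0)) => //; first by rewrite p0 p3.
  by rewrite p0.
have ws1 : size s1 = ninv (stransp N i * w)%g by rewrite e1 w1.
case: (boolP ((i.+1 < j)%N || (j.+1 < i)%N)) => [far|nfar].
  have far' : (j.+1 < i)%N || (i.+1 < j)%N by rewrite orbC.
  have Dij : D i (stransp N j * w)%g by rewrite D_far.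
  set x := (stransp N i * (stransp N j * w))%g.
  have [sx [ox px zx]] := exists_word x.
  have i1 := inv_sD hi Dij; have i2 := inv_sD hj Dj; have i3 := inv_sD hi Di.
  have oa : word_ok N (j :: sx) by rewrite /word_ok /= -/(word_ok N sx) ox hj.
  have ob : word_ok N (i :: sx) by rewrite /word_ok /= -/(word_ok N sx) ox hi.
  have pa : word_perm N (j :: sx) = (stransp N i * w)%g.
    by rewrite word_perm_cons px /x mulgA (stransp_comm hj hi far') -mulgA stranspK.
  have pb : word_perm N (i :: sx) = (stransp N j * w)%g.
    by rewrite word_perm_cons px /x stranspK.
  have za : size (j :: sx) = size s1.
    rewrite /= zx ws1; move: i1 i2 i3; rewrite -/x; absninv; slia.
  have zb : size (i :: sx) = size s2.
    rewrite /= zx -sz ws1; move: i1 i2 i3; rewrite -/x; absninv; slia.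
  have E1 := red _ s1 ok1 w1 ws1 _ oa pa za lt1.
  have E2 := red _ s2 ok2 w2 ltac:(by rewrite e2 w2) _ ob pb zb ltac:(by rewrite -sz).
  rewrite E1 E2.
  by rewrite !word_prod_cons !mulrA HC.
have adj : forall i j s1 s2, j = i.+1 -> word_ok N s1 -> word_ok N s2 ->
   word_perm N s1 = (stransp N i * w)%g -> word_perm N s2 = (stransp N j * w)%g ->
   size s1 = ninv (stransp N i * w)%g -> size s2 = size s1 -> (size s1 < k)%N ->
   (1 <= i)%N -> (i.+1 <= m)%N -> D i w -> D j w ->
   T i * word_prod T s1 = T j * word_prod T s2.
  move=> a b t1 t2 -> o1 o2 p1 p2 z1 z2 l1 ha1 ha2 Da Db.
  have ha : (1 <= a <= m)%N by rewrite ha1 ltnW.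
  have hb : (1 <= a.+1 <= m)%N by rewrite ha2.
  have D1 := D_adj1 ha1 ha2 Da Db.
  have D2 := D_adj2 ha1 ha2 Db.
  set x := (stransp N a * (stransp N a.+1 * (stransp N a * w)))%g.
  have [sx [ox px zx]] := exists_word x.
  have i1 := inv_sD ha D2; have i2 := inv_sD hb D1; have i3 := inv_sD ha Da; have i4 := inv_sD hb Db.
  have oa : word_ok N (a.+1 :: a :: sx) by rewrite /word_ok /= -/(word_ok N sx) ox ha ha2.
  have ob : word_ok N (a :: a.+1 :: sx) by rewrite /word_ok /= -/(word_ok N sx) ox ha ha2.
  have pa : word_perm N (a.+1 :: a :: sx) = (stransp N a * w)%g.
    by rewrite !word_perm_cons px /x !stranspK.
  have pb : word_perm N (a :: a.+1 :: sx) = (stransp N a.+1 * w)%g.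
    by rewrite !word_perm_cons px /x braid_word.
  have za : size (a.+1 :: a :: sx) = size t1.
    rewrite /= zx z1; move: i1 i2 i3; rewrite -/x; absninv; slia.
  have zb : size (a :: a.+1 :: sx) = size t2.
    rewrite /= zx z2 z1; move: i1 i2 i3; rewrite -/x; absninv; slia.
  have E1 := red _ t1 o1 p1 z1 _ oa pa za l1.
  have zt2 : size t2 = ninv (stransp N a.+1 * w)%g.
    rewrite z2 z1; move: i3 i4; absninv; slia.
  have E2 := red _ t2 o2 p2 zt2 _ ob pb zb ltac:(by rewrite z2).
  rewrite E1 E2.
  by rewrite !word_prod_cons !mulrA HB.
have : (j == i.+1) || (i == j.+1) by move: nfar nij hi hj; slia.
case/orP => /eqP e.
  have hi1 : (1 <= i)%N by case/andP: hi.
  have hi2 : (i.+1 <= m)%N by rewrite -e; case/andP: hj.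
  exact: (adj i j s1 s2 e ok1 ok2 w1 w2 ws1 (esym sz) lt1 hi1 hi2 Di Dj).
have hj1 : (1 <= j)%N by case/andP: hj.
have hj2 : (j.+1 <= m)%N by rewrite -e; case/andP: hi.
have ws2 : size s2 = ninv (stransp N j * w)%g by rewrite e2 w2.
have lt2 : (size s2 < k)%N by rewrite -sz.
symmetry; exact: (adj j i s2 s1 e ok2 ok1 w2 w1 ws2 sz lt2 hj1 hj2 Dj Di).
Qed.

End Matsumoto.

Local Open Scope ring_scope.

Section Q.
Variable m : nat.
Local Notation N := m.+1.
Variables (R : comUnitRingType) (A : algType R) (r : nat).
Variables (q : R) (u : nat -> R) (F : nat -> {poly R}) (t T : nat -> A).
Hypothesis Hrel : AK_relations N r q u F t T.

Inductive inQ : A -> Prop :=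
 | inQ1 : inQ 1
 | inQD x y : inQ x -> inQ y -> inQ (x + y)
 | inQZ (a : R) x : inQ x -> inQ (a *: x)
 | inQt i x : (1 <= i <= N)%N -> inQ x -> inQ (t i * x).

Lemma inQ0 : inQ 0.
Proof. by rewrite -(scale0r 1); apply: inQZ; apply: inQ1. Qed.

Lemma inQN x : inQ x -> inQ (- x).
Proof. by move=> h; rewrite -scaleN1r; apply: inQZ. Qed.

Lemma inQB x y : inQ x -> inQ y -> inQ (x - y).
Proof. by move=> hx hy; apply: inQD => //; apply: inQN. Qed.

Lemma inQM x y : inQ x -> inQ y -> inQ (x * y).
Proof.
move=> hx hy; elim: hx => [|a b _ ha _ hb|c a _ ha|i a hi _ ha].
- by rewrite mul1r.
- by rewrite mulrDl; apply: inQD.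
- by rewrite -scalerAl; apply: inQZ.
- by rewrite -mulrA; apply: inQt.
Qed.

Lemma inQ_sum (I : Type) (s : seq I) (P : pred I) (f : I -> A) :
  (forall i, P i -> inQ (f i)) -> inQ (\sum_(i <- s | P i) f i).
Proof. by move=> h; apply: big_ind => //; [apply: inQ0 | apply: inQD]. Qed.

Lemma inQ_prod (I : Type) (s : seq I) (P : pred I) (f : I -> A) :
  (forall i, P i -> inQ (f i)) -> inQ (\prod_(i <- s | P i) f i).
Proof. by move=> h; apply: big_ind => //; [apply: inQ1 | apply: inQM]. Qed.

Lemma inQ_t i : (1 <= i <= N)%N -> inQ (t i).
Proof. by move=> hi; rewrite -[t i]mulr1; apply: inQt => //; apply: inQ1. Qed.

Lemma inQ_exp i k : (1 <= i <= N)%N -> inQ (t i ^+ k).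
Proof.
move=> hi; elim: k => [|k IH]; first by rewrite expr0; apply: inQ1.
by rewrite exprS; apply: inQt.
Qed.

Lemma inQ_alg (c : R) : inQ (c%:A).
Proof. by apply: inQZ; apply: inQ1. Qed.

Lemma inQ_peval p i : (1 <= i <= N)%N -> inQ (peval p (t i)).
Proof. by move=> hi; apply: inQ_sum => k _; apply: inQZ; apply: inQ_exp. Qed.

Lemma inQ_AKcorr j : (2 <= j <= N)%N -> inQ (@AKcorr R A r q u F t j).
Proof.
move=> hj; apply: inQ_sum => c1 _; apply: inQ_sum => c2 _; apply: inQZ.
apply: inQM; apply: inQ_peval; lia.
Qed.

Lemma inQ_bk k : inQ (@bk R A N r u t k).
Proof.
apply: inQ_prod => i _; apply: inQ_prod => j _; apply: inQM; last exact: inQ_alg.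
apply: inQB; last exact: inQ_alg.
by apply: inQ_t; have := ltn_ord i; lia.
Qed.

Lemma inQ_Bp i j : inQ (@Bp R A N r q u t i j).
Proof. by apply: inQZ; apply: inQ_sum => k _; apply: inQ_bk. Qed.

Lemma inQ_tmon (c : {ffun 'I_N -> 'I_r}) : inQ (tmon t c).
Proof. by apply: inQ_prod => i _; apply: inQ_exp; have := ltn_ord i; lia. Qed.

Lemma Tcomm j x : (1 <= j <= m)%N -> inQ x ->
  exists x1 x2, [/\ inQ x1, inQ x2 & T j * x = x1 * T j + x2].
Proof.
have [_ [_ [_ [_ [_ [Htt Hcorr]]]]]] := Hrel.
move=> hj hx; elim: hx => [|a b _ [a1 [a2 [? ? ea]]] _ [b1 [b2 [? ? eb]]]
    |c a _ [a1 [a2 [? ? ea]]]|i a hi Ha [a1 [a2 [? ? ea]]]].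
- by exists 1, 0; split; [apply: inQ1 | apply: inQ0 | rewrite mulr1 mul1r addr0].
- exists (a1 + b1), (a2 + b2); split; try by apply: inQD.
  by rewrite mulrDr ea eb mulrDl addrACA.
- exists (c *: a1), (c *: a2); split; try by apply: inQZ.
  by rewrite -scalerAr ea scalerDr scalerAl.
- have hJ : (2 <= j.+1 <= N)%N by lia.
  have [C1 C2] := Hcorr j.+1 hJ; rewrite /= in C1 C2.
  have hC := inQ_AKcorr hJ.
  case: (eqVneq i j.+1) => [ei|ni].
    subst i; exists (t j * a1), (t j * a2 + @AKcorr R A r q u F t j.+1 * a).
    split; [apply: inQt => //; lia | apply: inQD; [apply: inQt => //; lia | exact: inQM hC Ha] |].
    by rewrite mulrA C1 mulrDl -!mulrA ea mulrDr addrA.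
  case: (eqVneq i j) => [ei|ni'].
    subst i; exists (t j.+1 * a1), (t j.+1 * a2 - @AKcorr R A r q u F t j.+1 * a).
    split; [apply: inQt => //; lia | apply: inQB; [apply: inQt => //; lia | exact: inQM hC Ha] |].
    by rewrite mulrA C2 mulrBl -!mulrA ea mulrDr addrA.
  exists (t i * a1), (t i * a2); split; try by apply: inQt.
  have -> : T j * (t i * a) = t i * (T j * a) by rewrite mulrA Htt // mulrA.
  by rewrite ea mulrDr mulrA.
Qed.

End Q.

Local Open Scope ring_scope.

Lemma pow_red (R : comUnitRingType) (A : algType R) (r : nat) (u : nat -> R) (x : A) :
  \prod_(1 <= c < r.+1) (x - (u c)%:A) = 0 ->
  exists a : nat -> R, x ^+ r = \sum_(l < r) a l *: x ^+ l.
Proof.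
move=> H.
set p := \prod_(1 <= c < r.+1) ('X - (u c)%:P).
have hp : horner_alg x p = 0.
  rewrite /p rmorph_prod -[RHS]H; apply: eq_bigr => c _.
  by rewrite rmorphB /= horner_algX horner_algC.
have mon : p \is monic by apply: monic_prod_XsubC.
have sz : size p = r.+1 by rewrite /p size_prod_XsubC /index_iota size_iota subn1.
have szm : (size (map_poly (in_alg A) p) <= r.+1)%N.
  by rewrite -sz map_polyE (leq_trans (size_Poly _)) // size_map.
move: hp; rewrite /horner_alg /horner_morph (horner_coef_wide _ szm) big_ord_recr /=.
have lc : p`_r = 1 by move/monicP: mon; rewrite lead_coefE sz.
rewrite coef_map_id0 ?scale0r //.
have lc2 : GRing.in_alg A p`_r = 1 by rewrite /= lc scale1r.
rewrite lc2 mul1r => /eqP; rewrite addrC addr_eq0 => /eqP ->.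
exists (fun l => - p`_l); rewrite -sumrN; apply: eq_bigr => l _.
rewrite coef_map_id0 /=; last by rewrite scale0r.
  by rewrite /GRing.in_alg /= -scalerAl mul1r scaleNr.
by rewrite /GRing.in_alg /= scale0r.
Qed.

Lemma prod_seq_commD1 (A : nzRingType) (I : eqType) (s : seq I) (f : I -> A) j0 :
  uniq s -> j0 \in s -> (forall i j, GRing.comm (f i) (f j)) ->
  \prod_(i <- s) f i = f j0 * \prod_(i <- s | i != j0) f i.
Proof.
move=> us hj hc; elim: s us hj => [//|x s IH] /= /andP[xs us].
rewrite in_cons big_cons [in RHS]big_cons.
case: (eqVneq x j0) => [<-|nx] /= hj.
  congr (_ * _); rewrite big_seq_cond [RHS]big_seq_cond; apply: eq_bigl => i.
  by case: (boolP (i \in s)) => //= his; apply/esym/negP => /eqP ei; move: xs; rewrite -ei his.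
rewrite IH // mulrA hc -mulrA //.
Qed.

Lemma prod_commD1 (A : nzRingType) (I : finType) (f : I -> A) j0 :
  (forall i j, GRing.comm (f i) (f j)) ->
  \prod_i f i = f j0 * \prod_(i | i != j0) f i.
Proof. by move=> hc; apply: prod_seq_commD1 => //; apply: index_enum_uniq. Qed.

Section Tred.
Variable m : nat.
Local Notation N := m.+1.
Variables (R : comUnitRingType) (A : algType R) (r : nat).
Variables (q : R) (u : nat -> R) (F : nat -> {poly R}) (t T : nat -> A).
Hypothesis Hrel : AK_relations N r.+1 q u F t T.
Local Notation C := {ffun 'I_N -> 'I_r.+1}.

Definition Qspan (x : A) := exists b : {ffun C -> R}, x = \sum_c b c *: tmon t c.

Lemma Qspan0 : Qspan 0.
Proof. by exists 0; rewrite big1 // => c _; rewrite ffunE scale0r. Qed.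

Lemma QspanD x y : Qspan x -> Qspan y -> Qspan (x + y).
Proof.
move=> [b1 ->] [b2 ->]; exists (b1 + b2); rewrite -big_split; apply: eq_bigr => c _.
by rewrite ffunE scalerDl.
Qed.

Lemma QspanZ a x : Qspan x -> Qspan (a *: x).
Proof.
move=> [b ->]; exists [ffun c => a * b c]; rewrite scaler_sumr; apply: eq_bigr => c _.
by rewrite ffunE scalerA.
Qed.

Lemma Qspan_sum (I : Type) (s : seq I) (P : pred I) (f : I -> A) :
  (forall i, P i -> Qspan (f i)) -> Qspan (\sum_(i <- s | P i) f i).
Proof. by move=> h; apply: big_ind => //; [apply: Qspan0 | apply: QspanD]. Qed.

Lemma Qspan_tmon (c : C) : Qspan (tmon t c).
Proof.
exists [ffun c' => (c' == c)%:R]; rewrite (bigD1 c) //= ffunE eqxx scale1r big1 ?addr0 //.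
by move=> c' /negPf nc; rewrite ffunE nc scale0r.
Qed.

Definition upd (c : C) (k : 'I_N) (l : 'I_r.+1) : C := [ffun j => if j == k then l else c j].

Lemma t_tmon i (c : C) : (1 <= i <= N)%N -> Qspan (t i * tmon t c).
Proof.
have [_ [Hpoly [_ [_ [Htc _]]]]] := Hrel.
move=> hi.
set k : 'I_N := inord i.-1.
have ek : i = (k : nat).+1 by rewrite /k inordK; lia.
have hcomm : forall (d : C) (j j' : 'I_N), GRing.comm (t j.+1 ^+ d j) (t j'.+1 ^+ d j').
  move=> d j j'; apply: commrX; apply/commr_sym; apply: commrX.
  by rewrite /GRing.comm Htc //; have := ltn_ord j; have := ltn_ord j'; lia.
set P := \prod_(j | j != k) t j.+1 ^+ c j.
have eP : forall d : C, (forall j, j != k -> d j = c j) ->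
   tmon t d = t i ^+ d k * P.
  move=> d hd; rewrite /tmon (@prod_commD1 _ _ _ k (hcomm d)) ek; congr (_ * _).
  by apply: eq_bigr => j hj; rewrite hd.
have -> : t i * tmon t c = t i ^+ (c k).+1 * P by rewrite (eP c) // mulrA exprS.
case: (ltnP (c k).+1 r.+1) => hck.
  pose c' := upd c k (Ordinal hck).
  rewrite (_ : t i ^+ (c k).+1 * P = tmon t c'); first exact: Qspan_tmon.
  rewrite (eP c') ?ffunE ?eqxx //.
  by move=> j hj; rewrite ffunE (negPf hj).
have eck : (c k).+1 = r.+1 by have := ltn_ord (c k); lia.
have [a ea] := pow_red (Hpoly i hi).
rewrite eck ea mulr_suml; apply: Qspan_sum => l _.
rewrite -scalerAl (_ : t i ^+ l * P = tmon t (upd c k l)); first by apply: QspanZ; apply: Qspan_tmon.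
by rewrite (eP (upd c k l)) ?ffunE ?eqxx // => j hj; rewrite ffunE (negPf hj).
Qed.

Lemma inQ_Qspan x : inQ m t x -> Qspan x.
Proof.
elim => [|a b _ ha _ hb|c a _ ha|i a hi _ [b ->]].
- have -> : (1 : A) = tmon t ([ffun => ord0] : C).
    by rewrite /tmon big1 // => j _; rewrite ffunE expr0.
  exact: Qspan_tmon.
- exact: QspanD.
- exact: QspanZ.
- rewrite mulr_sumr; apply: Qspan_sum => c _; rewrite -scalerAr; apply: QspanZ.
  exact: t_tmon.
Qed.

End Tred.

Local Open Scope ring_scope.

Section Tri.
Variables (R : nzRingType) (M : lmodType R) (I : finType).
Variables (e f : I -> M) (lam : I -> nat).
Hypothesis He : is_Rbasis e.
Hypothesis Hf : forall x, exists a : {ffun I -> R},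
  (forall y, (lam x <= lam y)%N -> a y = 0) /\ f x = e x + \sum_y a y *: e y.

Lemma e_indep (b : {ffun I -> R}) : \sum_y b y *: e y = 0 -> b = 0.
Proof.
move=> hb; have [c [_ hc]] := He 0.
have h1 := hc b (esym hb).
have h2 : c = 0 by apply: hc; rewrite big1 // => y _; rewrite ffunE scale0r.
by rewrite -h1 -h2.
Qed.

Definition Fs (z : M) := exists c : {ffun I -> R}, z = \sum_i c i *: f i.

Lemma Fs0 : Fs 0.
Proof. by exists 0; rewrite big1 // => i _; rewrite ffunE scale0r. Qed.

Lemma FsD z1 z2 : Fs z1 -> Fs z2 -> Fs (z1 + z2).
Proof.
move=> [c1 ->] [c2 ->]; exists (c1 + c2); rewrite -big_split; apply: eq_bigr => i _.
by rewrite ffunE scalerDl.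
Qed.

Lemma FsZ a z : Fs z -> Fs (a *: z).
Proof.
move=> [c ->]; exists [ffun i => a * c i]; rewrite scaler_sumr; apply: eq_bigr => i _.
by rewrite ffunE scalerA.
Qed.

Lemma Fs_sum (J : Type) (s : seq J) (P : pred J) (h : J -> M) :
  (forall i, P i -> Fs (h i)) -> Fs (\sum_(i <- s | P i) h i).
Proof. by move=> H; apply: big_ind => //; [apply: Fs0 | apply: FsD]. Qed.

Lemma Fs_f x : Fs (f x).
Proof.
exists [ffun y => (y == x)%:R]; rewrite (bigD1 x) //= ffunE eqxx scale1r big1 ?addr0 //.
by move=> y /negPf ny; rewrite ffunE ny scale0r.
Qed.

Lemma Fs_e x : Fs (e x).
Proof.
suff H : forall k x, (lam x < k)%N -> Fs (e x) by exact: (H (lam x).+1).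
elim=> [//|k IH] y hy.
have [a [ha efy]] := Hf y.
have -> : e y = f y - \sum_z a z *: e z by rewrite efy addrK.
apply: FsD; first exact: Fs_f.
rewrite -scaleN1r; apply: FsZ; apply: Fs_sum => z _.
case: (eqVneq (a z) 0) => [->|nz]; first by rewrite scale0r; apply: Fs0.
apply: FsZ; apply: IH.
have : ~~ (lam y <= lam z)%N by apply/negP => /ha; apply/eqP.
by move: hy; clear; lia.
Qed.

Lemma f_indep (d : {ffun I -> R}) : \sum_y d y *: f y = 0 -> d = 0.
Proof.
move=> hd; apply/ffunP => x0; rewrite ffunE; apply/eqP; apply: contraT => nz0.
pose x := [arg max_(y > x0 | d y != 0) lam y].
have [hx hmax] : d x != 0 /\ forall y, d y != 0 -> (lam y <= lam x)%N.
  by rewrite /x; case: arg_maxnP => // z hz H; split.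
pose Px (z : M) := exists b : {ffun I -> R}, b x = 0 /\ z = \sum_i b i *: e i.
have Px0 : Px 0 by exists 0; rewrite ffunE; split => //; rewrite big1 // => i _; rewrite ffunE scale0r.
have PxD z1 z2 : Px z1 -> Px z2 -> Px (z1 + z2).
  move=> [b1 [h1 ->]] [b2 [h2 ->]]; exists (b1 + b2); rewrite ffunE h1 h2 addr0; split => //.
  by rewrite -big_split; apply: eq_bigr => i _; rewrite ffunE scalerDl.
have PxZ a z : Px z -> Px (a *: z).
  move=> [b [h ->]]; exists [ffun i => a * b i]; rewrite ffunE h mulr0; split => //.
  by rewrite scaler_sumr; apply: eq_bigr => i _; rewrite ffunE scalerA.
have Pxs (J : Type) (s : seq J) (P : pred J) (h : J -> M) :
    (forall i, P i -> Px (h i)) -> Px (\sum_(i <- s | P i) h i).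
  by move=> H; apply: big_ind => //.
have Pxe y : y != x -> Px (e y).
  move=> ny; exists [ffun i => (i == y)%:R]; rewrite ffunE eq_sym (negPf ny); split => //.
  rewrite (bigD1 y) //= ffunE eqxx scale1r big1 ?addr0 //.
  by move=> i /negPf ni; rewrite ffunE ni scale0r.
have Plow y : (lam y <= lam x)%N -> Px (f y - e y).
  move=> hy; have [a [ha ->]] := Hf y; rewrite addrC addKr.
  apply: (Pxs) => z _; case: (eqVneq (a z) 0) => [->|nz]; first by rewrite scale0r.
  apply: (PxZ); apply: (Pxe); apply/eqP => ez; move: nz; rewrite ez ha ?eqxx //.
have : Px (\sum_y d y *: f y - d x *: e x).
  rewrite (bigD1 x) //= -addrA addrC -addrA; apply: (PxD).
    apply: (Pxs) => y ny; case: (eqVneq (d y) 0) => [->|nzy]; first by rewrite scale0r.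
    have hy := hmax y nzy.
    rewrite -[f y](subrK (e y)) scalerDr; apply: (PxD); apply: (PxZ); [exact: (Plow) | exact: (Pxe)].
  rewrite addrC -scalerBr; apply: (PxZ); exact: (Plow).
rewrite hd sub0r => -[b [hb eb]].
have E : \sum_i [ffun i => b i + (i == x)%:R * d x] i *: e i = \sum_i b i *: e i + d x *: e x.
  rewrite (eq_bigr (fun i => b i *: e i + ((i == x)%:R * d x) *: e i)); last by move=> i _; rewrite ffunE scalerDl.
  rewrite big_split /=; congr (_ + _).
  rewrite (bigD1 x) //= eqxx mul1r big1 ?addr0 // => i /negPf ni; by rewrite ni mul0r scale0r.
have := e_indep (b := [ffun i => b i + (i == x)%:R * d x]).
rewrite E -eb addNr.
move=> /(_ erefl) /ffunP /(_ x); rewrite !ffunE hb eqxx mul1r add0r => dx0.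
by move: hx; rewrite dx0 eqxx.
Qed.

Lemma tri_basis : is_Rbasis f.
Proof.
move=> z; have [c [ez _]] := He z.
have Fz : Fs z by rewrite ez; apply: Fs_sum => i _; apply: FsZ; apply: Fs_e.
case: Fz => d ed; exists d; split => // d' ed'.
have : \sum_y (d - d') y *: f y = 0.
  rewrite (eq_bigr (fun y => d y *: f y - d' y *: f y)); last by move=> y _; rewrite !ffunE scalerBl.
  by rewrite sumrB -ed -ed' subrr.
by move/f_indep => /eqP; rewrite subr_eq0 => /eqP.
Qed.

End Tri.

Local Open Scope ring_scope.


Section Final.
Variables (m r : nat).
Local Notation N := m.+1.
Local Notation C := {ffun 'I_N -> 'I_r.+1}.
Variables (R : comUnitRingType) (A : algType R).
Variables (q : R) (u : nat -> R) (F : nat -> {poly R}) (t T : nat -> A).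
Variable rw : 'S_N -> seq nat.
Hypothesis Hrel : AK_relations N r.+1 q u F t T.
Hypothesis Hq : q \is a GRing.unit.
Hypothesis Hrw : forall w, reduced_expr w (rw w).
Local Notation I := ('S_N * C)%type.
Let e (x : I) := tmon t x.2 * word_prod T (rw x.1).
Hypothesis He : is_Rbasis e.
Let lam (x : I) := size (rw x.1).
Let c0 : C := [ffun => ord0].

Lemma tmon0 : tmon t c0 = 1.
Proof. by rewrite /tmon big1 // => j _; rewrite ffunE expr0. Qed.

Lemma eT w : e (w, c0) = word_prod T (rw w).
Proof. by rewrite /e /= tmon0 mul1r. Qed.

Definition inV (k : nat) (z : A) := exists a : {ffun I -> R},
  (forall y, (k <= lam y)%N -> a y = 0) /\ z = \sum_y a y *: e y.

Lemma inV0 k : inV k 0.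
Proof. by exists 0; split => [y _|]; rewrite ?ffunE // big1 // => y _; rewrite ffunE scale0r. Qed.

Lemma inVD k z1 z2 : inV k z1 -> inV k z2 -> inV k (z1 + z2).
Proof.
move=> [a1 [h1 ->]] [a2 [h2 ->]]; exists (a1 + a2); split.
  by move=> y hy; rewrite ffunE h1 // h2 // addr0.
by rewrite -big_split; apply: eq_bigr => y _; rewrite ffunE scalerDl.
Qed.

Lemma inVZ k a z : inV k z -> inV k (a *: z).
Proof.
move=> [b [h ->]]; exists [ffun y => a * b y]; split.
  by move=> y hy; rewrite ffunE h // mulr0.
by rewrite scaler_sumr; apply: eq_bigr => y _; rewrite ffunE scalerA.
Qed.

Lemma inV_sum k (J : Type) (s : seq J) (P : pred J) (h : J -> A) :
  (forall i, P i -> inV k (h i)) -> inV k (\sum_(i <- s | P i) h i).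
Proof. by move=> H; apply: big_ind => //; [apply: inV0 | apply: inVD]. Qed.

Lemma inV_mono k k' z : (k <= k')%N -> inV k z -> inV k' z.
Proof. by move=> hk [a [h ->]]; exists a; split => // y hy; apply: h; apply: leq_trans hy. Qed.

Lemma inV_e x : inV (lam x).+1 (e x).
Proof.
exists [ffun y => (y == x)%:R]; split.
  by move=> y hy; rewrite ffunE; case: eqP => // ey; move: hy; rewrite ey ltnn.
rewrite (bigD1 x) //= ffunE eqxx scale1r big1 ?addr0 //.
by move=> y /negPf ny; rewrite ffunE ny scale0r.
Qed.

Lemma inV_T w : inV (size (rw w)).+1 (word_prod T (rw w)).
Proof. by rewrite -(eT w); exact: (inV_e (w, c0)). Qed.

Lemma HB : forall i, (1 <= i)%N -> (i.+1 <= m)%N -> T i * T i.+1 * T i = T i.+1 * T i * T i.+1.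
Proof. by have [_ [_ [H _]]] := Hrel. Qed.

Lemma HC : forall i j, (1 <= i <= m)%N -> (1 <= j <= m)%N -> (i.+1 < j)%N || (j.+1 < i)%N ->
  T i * T j = T j * T i.
Proof. by have [_ [_ [_ [H _]]]] := Hrel. Qed.

Lemma Tsq i : (1 <= i <= m)%N -> T i * T i = (q - q^-1) *: T i + 1.
Proof.
move=> hi; have [H _] := Hrel; have := H i hi.
rewrite mulrDr !mulrBl mulr_algl mulr_algr -scalerAl mul1r scalerA divrr // scale1r.
move=> h; apply/eqP; rewrite -subr_eq0 -h; apply/eqP.
rewrite scalerBl opprD opprB !addrA; congr (_ + _); by rewrite addrAC.
Qed.


Lemma Tmul i w : (1 <= i <= m)%N -> inV (size (rw w)).+2 (T i * word_prod T (rw w)).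
Proof.
move=> hi.
have [ok pw _] := Hrw w; have sw := len_inv Hrw w.
case hD: (D i w).
  set w' := (stransp N i * w)%g.
  have [ok' pw' _] := Hrw w'; have sw' := len_inv Hrw w'.
  have i1 := inv_sD hi hD.
  have E : word_prod T (rw w) = T i * word_prod T (rw w').
    rewrite -word_prod_cons; apply: (matsumoto HB HC) => //.
    - by rewrite /= hi ok'.
    - by rewrite word_perm_cons pw pw' /w' stranspK.
    - by rewrite pw.
    - by rewrite /= sw' sw -i1.
  rewrite E mulrA Tsq // mulrDl mul1r -scalerAl -E.
  apply: inVD; first by apply: inVZ; apply: (inV_mono _ (inV_T w)); lia.
  by apply: (inV_mono _ (inV_T w')); rewrite sw' sw -i1 -/w'; slia.
have E : T i * word_prod T (rw w) = word_prod T (rw (stransp N i * w)%g).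
  rewrite -word_prod_cons; apply: (matsumoto HB HC) => //.
  - by rewrite /= hi ok.
  - by have [] := Hrw (stransp N i * w)%g.
  - by rewrite word_perm_cons pw; have [] := Hrw (stransp N i * w)%g.
  - by rewrite /= word_perm_cons pw sw; have := inv_s w hi; rewrite hD /=; lia.
  - by rewrite len_inv //= sw; have := inv_s w hi; rewrite hD /=; lia.
rewrite E; apply: (inV_mono _ (inV_T _)).
by rewrite len_inv // sw; have := inv_s w hi; rewrite hD /=; lia.
Qed.


Lemma Qmul_V x z k : inQ m t x -> inV k z -> inV k (x * z).
Proof.
move=> hx [a [ha ->]]; rewrite mulr_sumr; apply: inV_sum => y _; rewrite -scalerAr.
case: (eqVneq (a y) 0) => [->|nz]; first by rewrite scale0r; apply: inV0.
apply: inVZ.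
have hy : (lam y < k)%N by rewrite ltnNge; apply/negP => /ha; apply/eqP.
have [b eb] := inQ_Qspan Hrel (inQM hx (inQ_tmon t y.2)).
rewrite /e mulrA eb mulr_suml; apply: inV_sum => c _; rewrite -scalerAl; apply: inVZ.
exact: (inV_mono _ (inV_e (y.1, c))).
Qed.

Lemma Tmul_V i z k : (1 <= i <= m)%N -> inV k z -> inV k.+1 (T i * z).
Proof.
move=> hi [a [ha ->]]; rewrite mulr_sumr; apply: inV_sum => y _; rewrite -scalerAr.
case: (eqVneq (a y) 0) => [->|nz]; first by rewrite scale0r; apply: inV0.
apply: inVZ.
have hy : (lam y < k)%N by rewrite ltnNge; apply/negP => /ha; apply/eqP.
have [x1 [x2 [h1 h2 ex]]] := Tcomm Hrel hi (inQ_tmon t y.2).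
rewrite /e mulrA ex mulrDl -mulrA; apply: inVD.
  by apply: Qmul_V => //; apply: (inV_mono _ (Tmul y.1 hi)).
by apply: Qmul_V => //; apply: (inV_mono _ (inV_T y.1)); apply: ltnW.
Qed.

Lemma Tword_V s : word_ok N s -> inV (size s).+1 (word_prod T s).
Proof.
elim: s => [|i s IH] /=.
  by move=> _; have := inV_T 1%g; rewrite (rw1 Hrw) /word_prod !big_nil.
by case/andP=> hi hs; rewrite word_prod_cons; apply: Tmul_V => //; apply: IH.
Qed.

Local Notation G := (g N r.+1 q u t T).

Lemma g_V s : word_ok N s -> inV (size s) (word_prod G s - word_prod T s).
Proof.
elim: s => [|i s IH] /=; first by move=> _; rewrite /word_prod !big_nil subrr; apply: inV0.
case/andP=> hi hs; rewrite !word_prod_cons /g.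
have alg : forall a b x y : A, (a + b) * x - a * y = a * (x - y) + b * x.
  by move=> a b x y; rewrite mulrDl mulrBr addrAC.
rewrite alg.
have hd := IH hs.
apply: inVD; first by apply: Tmul_V.
rewrite -[word_prod G s](subrK (word_prod T s)) mulrDr; apply: inVD.
  by apply: Qmul_V; [apply: inQ_Bp | apply: (inV_mono _ hd)].
by apply: Qmul_V; [apply: inQ_Bp | apply: Tword_V].
Qed.

Theorem final_basis : is_Rbasis (fun x : I => tmon t x.2 * word_prod G (rw x.1)).
Proof.
apply: (tri_basis He (lam := lam)) => x.
have [ok _ _] := Hrw x.1.
have := Qmul_V (inQ_tmon t x.2) (g_V ok).
move=> [a [ha ea]]; exists a; split => //.
by rewrite -ea mulrBr addrC subrK.
Qed.

End Final.


Unset Implicit Arguments.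
Set Strict Implicit.
Set Printing Implicit Defensive.

Theorem theorem3p9 (R : idomainType) (A : algType R) (n r : nat)
    (q : R) (u : nat -> R) (F : nat -> {poly R}) (t T : nat -> A)
    (rw : 'S_n -> seq nat) :
  (1 <= n)%N -> (1 <= r)%N ->
  q \is a GRing.unit -> Delta r u \is a GRing.unit ->
  is_F r u F ->
  (forall w : 'S_n, reduced_expr w (rw w)) ->
  AK_relations n r q u F t T ->
  (* Shoji's basis theorem: {t^c T_w} is an R-basis of A *)
  is_Rbasis (fun x : 'S_n * {ffun 'I_n -> 'I_r} =>
               tmon t x.2 * word_prod T (rw x.1)) ->
  is_Rbasis (fun x : 'S_n * {ffun 'I_n -> 'I_r} =>
               tmon t x.2 * word_prod (g n r q u t T) (rw x.1)).
Proof.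
case: n rw => [//|m] rw; case: r F => [//|r] F.
move=> _ _ hq _ _ Hrw Hrel He.
exact: (final_basis Hrel hq Hrw He).
Qed.
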